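(* Let $H$ be a set of $n$ objects with an associated decomposition scheme of combinatorial dimension $b$ that complies with the Clarkson–Shor framework. Assume its local growth function satisfies $u(m)\le 2^\alpha m^\beta$ for some real $\alpha$ and some $\beta\ge1$. Let $r>1$ and $\varphi\in(0,1)$. Let $R$ be a $\rho$-sample from $H$, where $$\rho\ \ge\ \max\Bigl(4r\bigl(b\ln 3+(\alpha-\beta)\ln 2+\ln\tfrac1\varphi\bigr),\ 8r\beta\ln(4r\beta)\Bigr).$$ Then, with probability at least $1-\varphi$, $\mathcal{CD}(R)$ is a $(1/r)$-cutting, i.e., every cell $\sigma\in\mathcal{CD}(R)$ satisfies $|K(\sigma)|\le n/r$.
   Context: Clarkson–Shor framework. $H$ is a finite set of objects embedded in some space $E$. Every subset $I\subseteq H$ determines a set $\mathcal{CD}(I)$ of cells. Combinatorial dimension: there is an integer $b>0$ such that for every $I\subseteq H$ and every $\sigma\in\mathcal{CD}(I)$ there is $J\subseteq I$ with $|J|\le b$ and $\sigma\in\mathcal{CD}(J)$. A smallest such $J$ is a defining set $D(\sigma)$ (any choice may be used). The least such $b$ is the combinatorial dimension. Conflict list: $f\in H$ conflicts with $\sigma$ if $\sigma\notin\mathcal{CD}(D(\sigma)\cup\{f\})$, and $K(\sigma)$ is the set of conflicting objects. Compliance means both axioms hold: (i) for every $R\subseteq H$ and every $\sigma\in\mathcal{CD}(R)$, some defining set $D(\sigma)\subseteq R$, and $K(\sigma)\cap R=\emptyset$; (ii) if $D(\sigma)\subseteq R$ for some defining set and $K(\sigma)\cap R=\emptyset$, then $\sigma\in\mathcal{CD}(R)$.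 Local growth function: $u(m)=\max_{I\subseteq H,|I|=m}|\mathcal{CD}(I)|$. A $\rho$-sample is the set of elements obtained by $\rho$ independent uniform draws from $H$, with repetition. *)

(* Defs.v *)
From Stdlib Require Import Reals.
From mathcomp Require Import all_boot.
Set Implicit Arguments. Unset Strict Implicit. Unset Printing Implicit Defensive.

(* Objects: H = the finite type T (n = #|T|).  Cells: a finite type C
   (only the finitely many cells in some CD(I), I ⊆ H, matter).
   CD I : {set C} is the set of cells determined by I. *)

Definition comb_dim_bound (T C : finType) (CD : {set T} -> {set C}) (b : nat) :=
  forall (I : {set T}) (s : C), s \in CD I ->
    exists J : {set T}, [/\ J \subset I, (#|J| <= b)%N & s \in CD J].

Definition comb_dim (T C : finType) (CD : {set T} -> {set C}) (b : nat) :=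
  [/\ (0 < b)%N, comb_dim_bound CD b &
      forall b', (0 < b')%N -> comb_dim_bound CD b' -> (b <= b')%N].

Definition is_def_set (T C : finType) (CD : {set T} -> {set C}) (s : C) (J : {set T}) :=
  s \in CD J /\ forall J' : {set T}, s \in CD J' -> (#|J| <= #|J'|)%N.

Definition def_set_choice (T C : finType) (CD : {set T} -> {set C}) (D : C -> {set T}) :=
  forall (I : {set T}) (s : C), s \in CD I -> is_def_set CD s (D s).

Definition conflict (T C : finType) (CD : {set T} -> {set C}) (D : C -> {set T}) (s : C)
  : {set T} := [set f | s \notin CD (f |: D s)].

Definition complies (T C : finType) (CD : {set T} -> {set C}) (D : C -> {set T}) :=
  (forall (R : {set T}) (s : C), s \in CD R ->
     (exists J, is_def_set CD s J /\ J \subset R) /\ conflict CD D s :&: R = set0) /\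
  (forall (R : {set T}) (s : C),
     (exists J, is_def_set CD s J /\ J \subset R) -> conflict CD D s :&: R = set0 ->
     s \in CD R).

Definition local_growth (T C : finType) (CD : {set T} -> {set C}) (m : nat) : nat :=
  \max_(I : {set T} | #|I| == m) #|CD I|.

(* the set of elements of a rho-sample (rho draws with repetition) *)
Definition sample_set (T : finType) (rho : nat) (t : {ffun 'I_rho -> T}) : {set T} :=
  [set t i | i : 'I_rho].

Definition is_cutting (T C : finType) (CD : {set T} -> {set C}) (D : C -> {set T})
  (r : R) (Rs : {set T}) : bool :=
  [forall s : C, (s \in CD Rs) ==>
     (if Rle_dec (INR #|conflict CD D s|) (Rdiv (INR #|T|) r) then true else false)].

(* probability (uniform product measure on H^rho) that a rho-sample gives a cutting *)
Definition prob_cutting (T C : finType) (CD : {set T} -> {set C}) (D : C -> {set T})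
  (r : R) (rho : nat) : R :=
  Rdiv (INR #|[set t : {ffun 'I_rho -> T} | is_cutting CD D r (sample_set t)]|)
       (INR (expn #|T| rho)).

(* Main.v *)
Require Import Defs.
From Stdlib Require Import Reals.
From mathcomp Require Import all_boot zify.
From Stdlib Require Import Lra Lia Psatz.
Set Implicit Arguments. Unset Strict Implicit.
Lemma card_family_prod (aT rT : finType) (F : aT -> pred rT) :
  #|(family F : simpl_pred {ffun aT -> rT})| = \prod_x #|F x|.
Proof. by rewrite card_family foldrE big_image. Qed.

Lemma card_partition_sum (X Y : finType) (f : X -> Y) (P : pred X) :
  \sum_y #|[set x | (f x == y) && P x]| = #|[set x | P x]|.
Proof.
rewrite -sum1_card (partition_big f predT) //=.
apply: eq_bigr => y _; rewrite -sum1_card; apply: eq_bigl => x.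
by rewrite !inE andbC.
Qed.
Definition badb (T C : finType) (CD : {set T} -> {set C}) (D : C -> {set T}) (r : R) (s : C) : bool :=
  ~~ (if Rle_dec (INR #|conflict CD D s|) (Rdiv (INR #|T|) r) then true else false).

Definition Aof (T : finType) (rho : nat) (a : {ffun 'I_rho -> option T}) : {set T} :=
  [set x | Some x \in codom a].
Definition aof (T : finType) (rho : nat) (g : {ffun 'I_rho -> T * 'I_3}) : {ffun 'I_rho -> option T} :=
  [ffun i => if (g i).2 == ord0 then Some (g i).1 else None].
Definition Bof (T : finType) (rho : nat) (g : {ffun 'I_rho -> T * 'I_3}) : {set T} :=
  [set x | [exists i, ((g i).2 != ord0) && ((g i).1 == x)]].
Definition tof (T : finType) (rho : nat) (g : {ffun 'I_rho -> T * 'I_3}) : {ffun 'I_rho -> T} :=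
  [ffun i => (g i).1].
Definition Gp (T C : finType) (CD : {set T} -> {set C}) (D : C -> {set T}) (r : R) (rho : nat)
  (g : {ffun 'I_rho -> T * 'I_3}) : bool :=
  (Aof (aof g) != set0) &&
  [exists s : C, [&& s \in CD (Aof (aof g)), badb CD D r s & conflict CD D s :&: Bof g == set0]].

Lemma in_Aof (T : finType) (rho : nat) (a : {ffun 'I_rho -> option T}) x :
  (x \in Aof a) = [exists i, a i == Some x].
Proof.
rewrite inE; apply/codomP/existsP => [[i /esym/eqP]|[i /eqP]]; [by exists i|].
by move=> <-; exists i.
Qed.

Lemma lower_fiber (T C : finType) (CD : {set T} -> {set C}) (D : C -> {set T})
  (b : nat) (r : R) (rho : nat) (i0 : 'I_rho) (t : {ffun 'I_rho -> T}) :
  comb_dim CD b -> complies CD D ->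
  ~~ is_cutting CD D r (sample_set t) ->
  3 ^ (rho - b) <= #|[set g | (tof g == t) && Gp CD D r g]|.
Proof.
move=> [b0 hb _] [ci cii] /forallPn [s]; rewrite negb_imply => /andP [sR bad].
have [[J [[JCD Jmin] JR]] KR] := ci _ _ sR.
have [J' [_ J'b sJ']] := hb _ _ sR.
have Jb : #|J| <= b := leq_trans (Jmin _ sJ') J'b.
pose pos x := odflt i0 [pick i | t i == x].
have posP : forall x, x \in J -> t (pos x) = x.
  move=> x /(subsetP JR) /imsetP [i _ ->]; rewrite /pos.
  by case: pickP => [j /eqP //|/(_ i)]; rewrite eqxx.
pose P : {set 'I_rho} := if J == set0 then [set i0] else pos @: J.
have Pn0 : P != set0.
  rewrite /P; case: ifP => [_|/negbT]; first by apply/set0Pn; exists i0; rewrite inE.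
  by case/set0Pn => x xJ; apply/set0Pn; exists (pos x); apply: imset_f.
have Pb : #|P| <= b.
  rewrite /P; case: ifP => _; first by rewrite cards1.
  exact: leq_trans (leq_imset_card _ _) Jb.
have JP : forall x, x \in J -> pos x \in P.
  move=> x xJ; rewrite /P; case: ifP => [/eqP J0|_]; first by rewrite J0 inE in xJ.
  exact: imset_f.
pose F i : pred (T * 'I_3) := if i \in P then pred1 (t i, ord0) else [pred z | z.1 == t i].
apply: (@leq_trans #|(family F : simpl_pred _)|).
  rewrite card_family_prod.
  rewrite (eq_bigr (fun i => if i \notin P then 3 else 1)); last first.
    move=> i _; rewrite /F; case: (i \in P) => /=; first by rewrite card1.
    rewrite (eq_card (B := setX [set t i] [set: 'I_3])); last by move=> [x c]; rewrite !inE andbT.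
    by rewrite cardsX cards1 cardsT card_ord.
  rewrite -big_mkcond /= prod_nat_const.
  apply: leq_pexp2l => //.
  rewrite (eq_card (B := ~: P)); last by move=> i; rewrite !inE.
  have := cardsC P; rewrite card_ord => HP.
  lia.
apply: subset_leq_card; apply/subsetP => g /familyP gF.
have hP : forall i, i \in P -> g i = (t i, ord0).
  by move=> i iP; have := gF i; rewrite /F iP => /eqP.
have ht : forall i, (g i).1 = t i.
  move=> i; have := gF i; rewrite /F; case: (i \in P) => /eqP -> //.
have AR : Aof (aof g) \subset sample_set t.
  apply/subsetP => x; rewrite in_Aof => /existsP [i]; rewrite ffunE.
  case: ifP => // _ /eqP [<-]; rewrite ht; exact: imset_f.
have BR : Bof g \subset sample_set t.
  apply/subsetP => x; rewrite inE => /existsP [i] /andP [_ /eqP <-]; rewrite ht; exact: imset_f.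
have JA : J \subset Aof (aof g).
  apply/subsetP => x xJ; rewrite in_Aof; apply/existsP; exists (pos x).
  by rewrite ffunE hP ?JP //= posP.
have KA0 : forall X : {set T}, X \subset sample_set t -> conflict CD D s :&: X = set0.
  move=> X XR; apply/eqP; rewrite -subset0 -KR; exact: setIS.
rewrite inE; apply/andP; split.
  by apply/eqP/ffunP => i; rewrite ffunE ht.
apply/andP; split.
  case/set0Pn: Pn0 => i iP; apply/set0Pn; exists (t i); rewrite in_Aof; apply/existsP; exists i.
  by rewrite ffunE hP.
apply/existsP; exists s; rewrite [badb _ _ _ _]bad /= (KA0 _ BR) eqxx andbT.
apply: cii; last exact: KA0.
by exists J; split.
Qed.

Lemma upper_fiber (T C : finType) (CD : {set T} -> {set C}) (D : C -> {set T})
  (r : R) (rho U0 N0 : nat) (a : {ffun 'I_rho -> option T}) :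
  (forall I : {set T}, I != set0 -> #|I| <= rho -> #|CD I| <= U0) ->
  (forall s, badb CD D r s -> #|T| - #|conflict CD D s| <= N0) ->
  (forall I : {set T}, Aof a = I -> #|I| <= rho) ->
  #|[set g | (aof g == a) && Gp CD D r g]| <=
    U0 * \prod_i (if a i is Some _ then 1 else 2 * N0).
Proof.
move=> hU hN hA.
case: (eqVneq (Aof a) set0) => [A0|An0].
  suff -> : [set g | (aof g == a) && Gp CD D r g] = set0 by rewrite cards0.
  apply/setP => g; rewrite !inE.
  apply/negbTE/negP => /andP [/eqP ga /andP []]; by rewrite ga A0 eqxx.
set W := \prod_i _.
pose Ps s := (s \in CD (Aof a)) && badb CD D r s.
pose F s i : pred (T * 'I_3) := if a i is Some x then pred1 (x, ord0)
   else [pred z | (z.2 != ord0) && (z.1 \notin conflict CD D s)].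
apply: (@leq_trans (\sum_(s | Ps s) #|(family (F s) : simpl_pred {ffun 'I_rho -> T * 'I_3})|)).
  rewrite -sum1_card.
  apply: (@leq_trans (\sum_g \sum_(s | Ps s) ((g \in family (F s)) : nat))); last first.
    rewrite exchange_big /=; apply: leq_sum => s _.
    rewrite (eq_bigr (fun g => if g \in family (F s) then 1 else 0)) //.
    by rewrite -big_mkcond sum1_card.
  rewrite [X in X <= _]big_mkcond /=; apply: leq_sum => g _.
  case: ifP => // /[!inE] /andP [/eqP ga /andP [_ /existsP [s /and3P [sA bs KB]]]].
  rewrite ga in sA.
  rewrite (bigD1 s) /=; last by rewrite /Ps sA bs.
  suff -> : g \in family (F s) by [].
  apply/familyP => i; rewrite /F.
  have gai : aof g i = a i by rewrite ga.
  rewrite ffunE in gai.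
  case: (a i) gai => [x|]; case E : (g i) => [y c] /=; case: ifP => // c0.
    by case => ->; rewrite inE; move/eqP: c0 => ->.
  move=> _; rewrite inE /= c0 /=; apply/negP => yK.
  have : y \in conflict CD D s :&: Bof g.
    rewrite inE yK inE; apply/existsP; exists i; by rewrite E /= c0 eqxx.
  by rewrite (eqP KB) inE.
apply: (@leq_trans (\sum_(s in CD (Aof a)) W)).
  rewrite big_mkcond [X in _ <= X]big_mkcond /=; apply: leq_sum => s _.
  rewrite /Ps; case: (s \in CD (Aof a)) => //=; case bs : (badb CD D r s) => //=.
  rewrite card_family_prod; apply: leq_prod => i _; rewrite /F.
  case: (a i) => [x|]; first by rewrite card1.
  rewrite (eq_card (B := setX (~: conflict CD D s) [set~ ord0])); last first.
    by move=> [x c]; rewrite !inE andbC.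
  rewrite cardsX cardsC1 card_ord mulnC leq_mul2l /=.
  have := cardsC (conflict CD D s) => HK.
  have := hN s bs; lia.
rewrite sum_nat_const; apply: leq_mul => //.
exact: hU An0 (hA _ erefl).
Qed.

Lemma card_Aof (T : finType) (rho : nat) (a : {ffun 'I_rho -> option T}) : #|Aof a| <= rho.
Proof.
rewrite -(card_imset _ Some_inj).
apply: (@leq_trans #|[pred z | z \in codom a]|).
  apply: subset_leq_card; apply/subsetP => z /imsetP [x]; rewrite inE => xa ->; exact: xa.
by apply: leq_trans (card_size _) _; rewrite size_codom card_ord.
Qed.

Lemma count_bound (T C : finType) (CD : {set T} -> {set C}) (D : C -> {set T})
  (b : nat) (r : R) (rho U0 N0 : nat) (i0 : 'I_rho) :
  comb_dim CD b -> complies CD D ->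
  (forall I : {set T}, I != set0 -> #|I| <= rho -> #|CD I| <= U0) ->
  (forall s, badb CD D r s -> #|T| - #|conflict CD D s| <= N0) ->
  #|[set t : {ffun 'I_rho -> T} | ~~ is_cutting CD D r (sample_set t)]| * 3 ^ (rho - b)
    <= U0 * (#|T| + 2 * N0) ^ rho.
Proof.
move=> hcd hc hU hN.
rewrite -sum1_card big_distrl /=.
apply: (@leq_trans (\sum_t #|[set g | (tof g == t) && Gp CD D r g]|)).
  rewrite [X in X <= _]big_mkcond /=; apply: leq_sum => t _.
  rewrite inE; case: ifP => // fail; rewrite mul1n.
  exact: lower_fiber i0 _ hcd hc fail.
rewrite (@card_partition_sum _ _ (@tof T rho) (@Gp T C CD D r rho)).
rewrite -(@card_partition_sum _ _ (@aof T rho) (@Gp T C CD D r rho)).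

apply: (@leq_trans (\sum_(a : {ffun 'I_rho -> option T}) U0 * \prod_i (if a i is Some _ then 1 else 2 * N0))).
  apply: leq_sum => a _; apply: upper_fiber => // I <-; exact: card_Aof.
rewrite -big_distrr /= leq_mul2l; apply/orP; right.
rewrite -(bigA_distr_bigA (fun (i : 'I_rho) (z : option T) => if z is Some _ then 1 else 2 * N0)) /=.
rewrite prod_nat_const card_ord.
rewrite (bigD1 None) //= addnC.
rewrite (eq_bigr (fun _ => 1)); last by case.
by rewrite sum1_card cardC1 card_option.
Qed.

Local Open Scope R_scope.
Unset Implicit Arguments.
Lemma ln_le_sub1 x : 0 < x -> ln x <= x - 1.
Proof. intro Hx. generalize (exp_ineq1_le (ln x)). rewrite exp_ln; lra. Qed.

Lemma key_ineq (r beta rho : R) : 1 < r -> 1 <= beta ->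
  8*r*beta*ln(4*r*beta) <= rho -> beta * (ln 2 + ln rho) <= 5*rho/(12*r).
Proof.
intros Hr Hb Hrho.
set (a := 4*r*beta).
assert (Ha : 4 < a) by (unfold a; nra).
set (L := ln a).
assert (HL : 1 < L).
{ unfold L. rewrite -{1}(ln_exp 1). apply ln_increasing. apply exp_pos.
  generalize exp_le_3; lra. }
assert (Hrho' : 2*a*L <= rho) by (replace (2*a*L) with (8*r*beta*L) by (unfold a; ring); exact Hrho).
set (y := rho / a).
assert (Hy : 2*L <= y).
{ unfold y. apply Rmult_le_reg_r with a; [lra|]. field_simplify; lra. }
assert (Hrhoy : rho = a * y) by (unfold y; field; lra).
assert (Hlnrho : ln rho = L + ln y).
{ rewrite Hrhoy. unfold L. apply ln_mult; lra. }
assert (Hlny : ln y <= ln 2 + (L - 1) + y/(2*L) - 1).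
{ assert (HL2' : 0 < y/(2*L)) by (apply Rdiv_lt_0_compat; lra).
  assert (Ey : ln y = ln (2*L) + ln (y/(2*L))).
  { rewrite -ln_mult; try lra. f_equal. field. lra. }
  rewrite Ey ln_mult; try lra.
    assert (HL1 : 0 < L) by lra. assert (HL2 : 0 < y/(2*L)) by (apply Rdiv_lt_0_compat; lra).
    pose proof (ln_le_sub1 L HL1). pose proof (ln_le_sub1 _ HL2). lra.
}
assert (Hln2 : ln 2 < 1).
{ rewrite -{1}(ln_exp 1). apply ln_increasing. lra.
  generalize (exp_ineq1 1 ltac:(lra)); lra. }
assert (Hyl : y/(2*L) <= y/2).
{ apply Rmult_le_compat_l; [lra|]. apply Rinv_le_contravar; lra. }
assert (Hgoal : ln 2 + L + ln y <= 5*y/3) by lra.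
assert (E : 5*rho/(12*r) = beta * (5*y/3)).
{ rewrite Hrhoy. unfold a. field. lra. }
rewrite E Hlnrho. apply Rmult_le_compat_l; lra.
Qed.

Lemma pow_exp_ln (x : R) (n : nat) : 0 < x -> x ^ n = exp (INR n * ln x).
Proof. intro Hx. rewrite -(Rpower_pow n x Hx). reflexivity. Qed.

Lemma exp_le_mono x y : x <= y -> exp x <= exp y.
Proof. intro H. destruct (Rle_lt_or_eq_dec _ _ H) as [H'|H'].
 left. apply exp_increasing; exact H'.
 subst; lra. Qed.

Lemma real_part (b rho : nat) (alpha beta r phi : R) :
 1 <= beta -> 1 < r -> 0 < phi < 1 ->
 4*r*(INR b * ln 3 + (alpha - beta)*ln 2 + ln (1/phi)) <= INR rho ->
 8*r*beta*ln(4*r*beta) <= INR rho ->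
 3^b * Rpower 2 alpha * Rpower (INR rho) beta * (1 - 2/(3*r))^rho <= phi.
Proof.
intros Hb Hr Hphi H1 H2.
assert (Hrho : 0 < INR rho).
{ assert (0 < ln (4*r*beta)). { rewrite -ln_1. apply ln_increasing; nra. }
  assert (0 < 8*r*beta*ln(4*r*beta)) by (apply Rmult_lt_0_compat; nra). lra. }
assert (Hc : 0 < 1 - 2/(3*r)).
{ assert (2/(3*r) < 1). { apply Rmult_lt_reg_r with (3*r); [lra|]. field_simplify; lra. } lra. }
rewrite (pow_exp_ln 3); try lra. rewrite (pow_exp_ln (1 - 2/(3*r))); try lra.
unfold Rpower. rewrite -!exp_plus.
rewrite -(exp_ln phi); try lra. apply exp_le_mono.
assert (Hl : ln (1 - 2/(3*r)) <= - (2/(3*r))) by (generalize (ln_le_sub1 _ Hc); lra).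
assert (Hk := key_ineq r beta (INR rho) Hr Hb H2).
assert (Hphi' : ln (1/phi) = - ln phi) by (unfold Rdiv; rewrite Rmult_1_l; apply ln_Rinv; lra).
assert (E1 : INR rho * ln (1 - 2/(3*r)) <= - (2 * INR rho/(3*r))).
{ replace (- (2 * INR rho/(3*r))) with (INR rho * (- (2/(3*r)))) by (field; lra).
  apply Rmult_le_compat_l; lra. }
assert (E2 : INR b * ln 3 + (alpha - beta)*ln 2 - ln phi <= INR rho / (4*r)).
{ apply Rmult_le_reg_l with (4*r); [lra|]. rewrite Hphi' in H1.
  replace (4 * r * (INR rho / (4 * r))) with (INR rho) by (field; lra). unfold Rminus. exact H1. }
assert (E3 : INR rho / (4*r) - 2 * INR rho/(3*r) + 5*INR rho/(12*r) = 0) by (field; lra).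
nra.
Qed.

Lemma INR_addn m n : INR (m + n)%N = INR m + INR n.
Proof. by rewrite -plusE plus_INR. Qed.
Lemma INR_muln m n : INR (m * n)%N = INR m * INR n.
Proof. by rewrite -multE mult_INR. Qed.
Lemma INR_subn m n : (n <= m)%N -> INR (m - n)%N = INR m - INR n.
Proof. move=> h; rewrite -minusE minus_INR //; exact/leP. Qed.
Lemma INR_expn m n : INR (m ^ n)%N = INR m ^ n.
Proof. elim: n => [|n IH]; first by rewrite expn0. by rewrite expnS INR_muln IH. Qed.
Lemma INR_leq m n : (m <= n)%N -> INR m <= INR n.
Proof. move=> h; apply: le_INR; exact/leP. Qed.

Lemma final_real (A X Y Z P E t3 tb t3b M phi : R) :
  0 <= A -> 0 <= X -> 0 <= Y -> 0 < t3 -> 0 <= tb -> 0 <= M -> 0 <= E -> 0 <= P ->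
  A * t3b <= X * Y -> t3 <= t3b * tb -> X <= P -> Y <= Z -> Z = t3 * M * E ->
  tb * P * E <= phi -> A <= M * phi.
Proof.
move=> hA hX hY ht3 htb hM hE hP h1 h2 h3 h4 h5 h6.
have e1 : A * t3 <= A * (t3b * tb) by apply: Rmult_le_compat_l.
have e2 : A * (t3b * tb) <= X * Y * tb.
  rewrite -Rmult_assoc; apply: Rmult_le_compat_r => //.
have e3 : X * Y * tb <= P * Z * tb.
  apply: Rmult_le_compat_r => //; apply: Rmult_le_compat => //.
have e4 : P * Z * tb = t3 * (M * (tb * P * E)) by rewrite h5; ring.
have e5 : t3 * (M * (tb * P * E)) <= t3 * (M * phi).
  apply: Rmult_le_compat_l; [lra|]; apply: Rmult_le_compat_l => //.
have e6 : A * t3 <= t3 * (M * phi) by lra.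
apply: (Rmult_le_reg_r t3) => //; lra.
Qed.

Theorem mainTheorem3 (T C : finType) (CD : {set T} -> {set C}) (D : C -> {set T})
  (b : nat) (alpha beta r phi : R) (rho : nat) :
  (0 < #|T|)%N ->
  comb_dim CD b ->
  def_set_choice CD D ->
  complies CD D ->
  (forall m : nat, (0 < m)%N ->
     INR (local_growth CD m) <= Rpower 2 alpha * Rpower (INR m) beta) ->
  1 <= beta ->
  1 < r ->
  0 < phi < 1 ->
  Rmax (4 * r * (INR b * ln 3 + (alpha - beta) * ln 2 + ln (1 / phi)))
       (8 * r * beta * ln (4 * r * beta)) <= INR rho ->
  1 - phi <= prob_cutting CD D r rho.
Proof.
move=> Hn hcd hD hc hgrow Hb Hr Hphi Hrho.
have H1 := Rle_trans _ _ _ (Rmax_l _ _) Hrho.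
have H2 := Rle_trans _ _ _ (Rmax_r _ _) Hrho.
have Hrho0 : 0 < INR rho.
  have h0 : 0 < ln (4*r*beta) by rewrite -ln_1; apply ln_increasing; nra.
  have : 0 < 8*r*beta*ln(4*r*beta) by apply Rmult_lt_0_compat; nra.
  lra.
have Hreal := real_part b rho alpha beta r phi Hb Hr Hphi H1 H2.
case: rho Hrho Hrho0 H1 H2 Hreal => [|rho'] Hrho Hrho0 H1 H2 Hreal; first by simpl in Hrho0; lra.
set rho := rho'.+1 in Hrho Hrho0 H1 H2 Hreal *.
pose U0 := \max_(m in [pred m : 'I_rho'.+2 | (0 < m)%N]) local_growth CD m.
pose N0 := \max_(s in [pred s | badb CD D r s]) (#|T| - #|conflict CD D s|)%N.
have hU : forall I : {set T}, I != set0 -> (#|I| <= rho)%N -> (#|CD I| <= U0)%N.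
  move=> I In0 Ir.
  apply: (@leq_trans (local_growth CD #|I|)).
    rewrite /local_growth.
    exact: (@leq_bigmax_cond _ (fun I' : {set T} => #|I'| == #|I|) (fun I' => #|CD I'|) I (eqxx _)).
  have Ir' : (#|I| < rho'.+2)%N by [].
  apply: (@leq_bigmax_cond _ (mem [pred m : 'I_rho'.+2 | (0 < m)%N]) (fun m : 'I_rho'.+2 => local_growth CD m) (Ordinal Ir')).
  by rewrite !inE /= card_gt0.
have hN : forall s, badb CD D r s -> (#|T| - #|conflict CD D s| <= N0)%N.
  move=> s bs; apply: (@leq_bigmax_cond _ (mem [pred s | badb CD D r s]) (fun s => #|T| - #|conflict CD D s|)%N s).
  by rewrite inE.
have HU0 : INR U0 <= Rpower 2 alpha * Rpower (INR rho) beta.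
  have pos : (0 < #|[pred m : 'I_rho'.+2 | (0 < m)%N]|)%N.
    apply/card_gt0P; exists (Ordinal (isT : (1 < rho'.+2)%N)); by rewrite inE.
  rewrite /U0; have [m mP ->] := eq_bigmax_cond (fun m : 'I_rho'.+2 => local_growth CD m) pos.
  rewrite inE /= in mP.
  apply: Rle_trans (hgrow m mP) _.
  apply: Rmult_le_compat_l; first by apply: Rlt_le; apply: exp_pos.
  apply: Rle_Rpower_l; first lra.
  split; first by apply: lt_0_INR; apply/ltP.
  apply: INR_leq; have := ltn_ord m; by [].
have Hnr : INR #|T| / r <= INR #|T|.
  have hn0 : 0 <= INR #|T| by apply: pos_INR.
  apply: (Rmult_le_reg_r r); first lra.
  have -> : INR #|T| / r * r = INR #|T| by field; lra.
  nra.
have HN0 : INR N0 <= INR #|T| - INR #|T| / r.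
  case: (posnP #|[pred s | badb CD D r s]|) => [e0|pos].
    have -> : N0 = 0%N.
      rewrite /N0 big_pred0 //; exact: card0_eq e0.
    have -> : INR 0 = 0 by []. move: Hnr; set nn := INR #|T|; set q := nn / r. move=> Hnr. lra.
  rewrite /N0; have [s sP ->] := eq_bigmax_cond (fun s => #|T| - #|conflict CD D s|)%N pos.
  rewrite inE /= /badb in sP.
  move: sP; case: Rle_dec => // hk _.
  have kn : (#|conflict CD D s| <= #|T|)%N by apply: max_card.
  rewrite INR_subn //; lra.
have Hcount := count_bound ord0 hcd hc hU hN.
set NF := #|[set t : {ffun 'I_rho -> T} | ~~ is_cutting CD D r (sample_set t)]| in Hcount.
set NC := #|[set t : {ffun 'I_rho -> T} | is_cutting CD D r (sample_set t)]|.
have Hsum : (NC + NF = #|T| ^ rho)%N.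
  have := cardsC [set t : {ffun 'I_rho -> T} | ~~ is_cutting CD D r (sample_set t)].
  rewrite card_ffun card_ord => <-; rewrite addnC; congr (addn _ _).
  by apply: eq_card => t; rewrite !inE negbK.
have Hn' : 0 < INR #|T| by apply: lt_0_INR; apply/ltP.
have Hc : 0 <= 1 - 2/(3*r).
  have : 2/(3*r) < 1 by apply: (Rmult_lt_reg_r (3*r)); [lra|]; field_simplify; lra.
  lra.
have I3 : INR 3 = 3 by rewrite /=; lra.
have I2 : INR 2 = 2 by rewrite /=; lra.
have HNF : INR NF <= INR #|T| ^ rho * phi.
  apply: (final_real (INR NF) (INR U0) ((INR #|T| + 2*INR N0)^rho) ((INR #|T| * (3 - 2/r))^rho)
     (Rpower 2 alpha * Rpower (INR rho) beta) ((1-2/(3*r))^rho) (3^rho) (3^b) (INR (3^(rho-b))%N)).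
  exact: pos_INR.
  exact: pos_INR.
  apply: pow_le; have := pos_INR N0; lra.
  apply: pow_lt; lra.
  apply: pow_le; lra.
  apply: pow_le; lra.
  exact: pow_le.
  apply: Rlt_le; apply: Rmult_lt_0_compat; apply: exp_pos.
  have := INR_leq _ _ Hcount; rewrite !INR_muln !INR_expn INR_addn INR_muln I3 I2 //.
  have h3 : (3 ^ rho <= 3 ^ (rho - b) * 3 ^ b)%N by rewrite -expnD leq_pexp2l //; lia.
    by have := INR_leq _ _ h3; rewrite INR_muln !INR_expn I3.
  exact: HU0.
  apply: pow_incr; split; first by have := pos_INR N0; lra.
    have : INR #|T| * (3 - 2 / r) = INR #|T| + 2 * (INR #|T| - INR #|T| / r) by field; lra.
    move=> ->; lra.
  rewrite -!Rpow_mult_distr; f_equal; field; lra.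
  by rewrite -(Rmult_assoc (3^b)).
rewrite /prob_cutting -/NC.
have HS := congr1 INR Hsum; rewrite INR_addn INR_expn in HS.
rewrite INR_expn.
have HM : 0 < INR #|T| ^ rho by apply: pow_lt.
apply: (Rmult_le_reg_r (INR #|T| ^ rho)) => //.
have -> : INR NC / INR #|T| ^ rho * INR #|T| ^ rho = INR NC by field; lra.
nra.
Qed.
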